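(* Let $L$ be an $R_0$-algebra, $k\in[0,1)$, and $\mu:L\to[0,1]$ a fuzzy subset. Then $\mu$ is an $(\in,\in\vee q_k)$-fuzzy fated filter of $L$ if and only if for every $t\in(0,\tfrac{1-k}{2}]$ the level set $U(\mu;t)=\{x\in L\mid \mu(x)\ge t\}$ is either empty or a fated filter of $L$.
   Context: An $R_0$-algebra is a bounded distributive lattice $(L,\wedge,\vee,0,1)$ with an order-reversing involution $\neg$ and a binary operation $\to$ such that for all $x,y,z\in L$: $x\to y=\neg y\to\neg x$; $1\to x=x$; $(y\to z)\wedge((x\to y)\to(x\to z))=y\to z$; $x\to(y\to z)=y\to(x\to z)$; $x\to(y\vee z)=(x\to y)\vee(x\to z)$; $(x\to y)\vee((x\to y)\to(\neg x\vee y))=1$. A fated filter of $L$ is a nonempty subset $A\subseteq L$ with $1\in A$ such that for all $x,y\in L$ and $a\in A$, $a\to((x\to y)\to x)\in A$ implies $x\in A$. For $x\in L$, $t\in(0,1]$: $x_t\in\mu$ iff $\mu(x)\ge t$; $x_t\,q_k\,\mu$ iff $\mu(x)+t+k>1$; $x_t\in\vee q_k\,\mu$ iff $x_t\in\mu$ or $x_t\,q_k\,\mu$. $\mu$ is an $(\in,\in\vee q_k)$-fuzzy fated filter of $L$ if (1) for all $x\in L$, $t\in(0,1]$: $x_t\in\mu\Rightarrow 1_t\in\vee q_k\,\mu$; and (2) for all $x,a,y\in L$, $t,s\in(0,1]$: if $(a\to((x\to y)\to x))_t\in\mu$ and $a_s\in\mu$ then $x_{\min\{t,s\}}\in\vee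 q_k\,\mu$. *)

(* Defs.v *)
From HB Require Import structures.
From mathcomp Require Import all_boot all_order all_algebra.
From mathcomp Require Import reals.
Set Implicit Arguments. Unset Strict Implicit. Unset Printing Implicit Defensive.
Import Order.TTheory GRing.Theory Num.Theory.

Record R0_algebra (d : Order.disp_t) (L : tbDistrLatticeType d)
    (neg : L -> L) (imp : L -> L -> L) : Prop := {
  r0_neg_invol : forall x : L, neg (neg x) = x;
  r0_neg_rev : forall x y : L, (x <= y)%O -> (neg y <= neg x)%O;
  r0_contra : forall x y : L, imp x y = imp (neg y) (neg x);
  r0_one_imp : forall x : L, imp \top%O x = x;
  r0_trans : forall x y z : L,
    Order.meet (imp y z) (imp (imp x y) (imp x z)) = imp y z;
  r0_exch : forall x y z : L, imp x (imp y z) = imp y (imp x z);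
  r0_imp_join : forall x y z : L,
    imp x (Order.join y z) = Order.join (imp x y) (imp x z);
  r0_last : forall x y : L,
    Order.join (imp x y) (imp (imp x y) (Order.join (neg x) y)) = \top%O
}.

Definition fated_filter (d : Order.disp_t) (L : tbDistrLatticeType d)
    (imp : L -> L -> L) (A : L -> Prop) : Prop :=
  (exists x, A x) /\ A \top%O /\
  (forall x y a : L, A a -> A (imp a (imp (imp x y) x)) -> A x).

Local Open Scope ring_scope.

(* x_t \in mu *)
Definition fin (d : Order.disp_t) (L : tbDistrLatticeType d) (R : realType)
    (mu : L -> R) (x : L) (t : R) : Prop := t <= mu x.
(* x_t q_k mu *)
Definition fq (d : Order.disp_t) (L : tbDistrLatticeType d) (R : realType)
    (k : R) (mu : L -> R) (x : L) (t : R) : Prop := 1 < mu x + t + k.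
(* x_t \in\/q_k mu *)
Definition finq (d : Order.disp_t) (L : tbDistrLatticeType d) (R : realType)
    (k : R) (mu : L -> R) (x : L) (t : R) : Prop := fin mu x t \/ fq k mu x t.

Definition fuzzy_fated_filter (d : Order.disp_t) (L : tbDistrLatticeType d)
    (R : realType) (imp : L -> L -> L) (k : R) (mu : L -> R) : Prop :=
  (forall (x : L) (t : R), 0 < t <= 1 -> fin mu x t -> finq k mu \top%O t) /\
  (forall (x a y : L) (t s : R), 0 < t <= 1 -> 0 < s <= 1 ->
     fin mu (imp a (imp (imp x y) x)) t -> fin mu a s ->
     finq k mu x (Num.min t s)).

Definition level_set (d : Order.disp_t) (L : tbDistrLatticeType d) (R : realType)
    (mu : L -> R) (t : R) : L -> Prop := fun x => t <= mu x.

(* Main.v *)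
Require Import Defs.
From HB Require Import structures.
From mathcomp Require Import all_boot all_order all_algebra.
From mathcomp Require Import reals.
From mathcomp Require Import lra.
From Stdlib Require Import Classical.
Import Order.TTheory GRing.Theory Num.Theory.
Local Open Scope ring_scope.

Lemma aux_min (R : realType) (k m v : R) : k < 1 -> 0 < m ->
  v < m -> v + m + k <= 1 ->
  [/\ v < Num.min m ((1-k)/2), 0 < Num.min m ((1-k)/2),
      Num.min m ((1-k)/2) <= (1-k)/2 & Num.min m ((1-k)/2) <= m].
Proof.
move=> hk hm hv hv2; split.
- rewrite lt_min; apply/andP; split; first by [].
  case: (lerP m ((1-k)/2)) => h; lra.
- rewrite lt_min; apply/andP; split; lra.
- by rewrite ge_min lexx orbT.
- by rewrite ge_min lexx.
Qed.

Theorem theorem3p12 (d : Order.disp_t) (L : tbDistrLatticeType d)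
    (neg : L -> L) (imp : L -> L -> L) (HL : R0_algebra neg imp)
    (R : realType) (k : R) (hk : 0 <= k < 1)
    (mu : L -> R) (hmu : forall x : L, 0 <= mu x <= 1) :
  fuzzy_fated_filter imp k mu <->
  (forall t : R, 0 < t <= (1 - k) / 2 ->
     (forall x : L, ~ level_set mu t x) \/ fated_filter imp (level_set mu t)).
Proof.
case/andP: hk => hk0 hk1.
rewrite /fuzzy_fated_filter /fated_filter /level_set /finq /fin /fq.
split.
- move=> [H1 H2] t /andP[ht0 ht1].
  have ht1' : t <= 1 by lra.
  have htt : 0 < t <= 1 by apply/andP; split.
  case: (classic (exists x, t <= mu x)) => [[x hx]|hn]; last first.
    by left => x hx; apply: hn; exists x.
  right; split; first by exists x.
  split.
    case: (H1 x t htt hx) => // h; lra.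
  move=> y z a ha hi.
  case: (H2 y a z t t htt htt hi ha); rewrite minxx // => h; lra.
- move=> H; split.
  + move=> x t /andP[ht0 ht1] hx.
    case: (lerP t (mu \top%O)) => h1; first by left.
    case: (ltrP 1 (mu \top%O + t + k)) => h2; first by right.
    exfalso.
    have [A1 A2 A3 A4] := @aux_min R _ _ _ hk1 ht0 h1 h2.
    have hr : 0 < Num.min t ((1 - k) / 2) <= (1 - k) / 2 by apply/andP.
    case: (H _ hr) => [hn|[_ [htop _]]].
      by apply: (hn x); apply: le_trans A4 hx.
    lra.
  + move=> x a y t s /andP[ht0 ht1] /andP[hs0 hs1] hi ha.
    have hm0 : 0 < Num.min t s by rewrite lt_min ht0 hs0.
    case: (lerP (Num.min t s) (mu x)) => h1; first by left.
    case: (ltrP 1 (mu x + Num.min t s + k)) => h2; first by right.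
    exfalso.
    have [A1 A2 A3 A4] := @aux_min R _ _ _ hk1 hm0 h1 h2.
    have hr : 0 < Num.min (Num.min t s) ((1 - k) / 2) <= (1 - k) / 2 by apply/andP.
    have Ht : Num.min t s <= t by rewrite ge_min lexx.
    have Hs : Num.min t s <= s by rewrite ge_min lexx orbT.
    case: (H _ hr) => [hn|[_ [_ hc]]].
      by apply: (hn a); apply: le_trans A4 _; apply: le_trans Hs ha.
    have := hc x y a (le_trans A4 (le_trans Hs ha)) (le_trans A4 (le_trans Ht hi)).
    lra.
Qed.
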